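(* Let $G$ be an edge-maximal $K_{3,3}$-minor free graph of order $n\geq 1186$ with $\Delta(G)=n-1$ and $\Delta'(G)\leq n-2$. Then $q(G)\leq n+2$.
   Context: All graphs are finite, simple and undirected. $q(G)$ is the largest eigenvalue of the signless Laplacian matrix $Q(G)=D(G)+A(G)$. $\Delta(G)$ is the maximum degree of $G$, and $\Delta'(G)$ is the second largest degree: $\Delta'(G)=\max\{d(u): u\in V(G)\setminus\{v\}\}$ where $v$ is a vertex with $d(v)=\Delta(G)$. A graph $H$ is a minor of $G$ if $H$ can be obtained from $G$ by deleting edges, contracting edges, or deleting vertices; $G$ is $H$-minor free if it has no minor isomorphic to $H$. $G$ is edge-maximal $H$-minor free if $G$ is $H$-minor free and adding any edge joining two nonadjacent vertices of $G$ produces a graph having $H$ as a minor. $K_{3,3}$ is the complete bipartite graph with both parts of size 3. *)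

(* Defs.v *)
From HB Require Import structures.
From mathcomp Require Import all_boot all_order all_algebra.
From mathcomp Require Import classical_sets reals.
Set Implicit Arguments. Unset Strict Implicit. Unset Printing Implicit Defensive.
Import Order.TTheory GRing.Theory Num.Theory.

Record graph := Graph { gn : nat; gadj : rel 'I_gn }.
Arguments gadj : clear implicits.

Definition simple_graph (G : graph) :=
  symmetric (gadj G) /\ irreflexive (gadj G).

Definition graph_iso (G H : graph) : Prop :=
  exists f : 'I_(gn G) -> 'I_(gn H),
    bijective f /\ forall x y, gadj H (f x) (f y) = gadj G x y.

(* One elementary minor operation: delete an edge, delete a vertex,
   or contract an edge (merging v into u, keeping the graph simple). *)
Inductive minor_step : graph -> graph -> Prop :=
| MS_del_edge (G : graph) (u v : 'I_(gn G)) :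
    gadj G u v ->
    minor_step G (@Graph (gn G)
      (fun x y => gadj G x y && ~~ ([&& x == u & y == v] || [&& x == v & y == u])))
| MS_del_vertex (G : graph) (v : 'I_(gn G)) :
    minor_step G (@Graph (gn G).-1 (fun x y => gadj G (lift v x) (lift v y)))
| MS_contract (G : graph) (u v : 'I_(gn G)) :
    u != v -> gadj G u v ->
    minor_step G (@Graph (gn G).-1 (fun x y =>
      (x != y) &&
      [|| gadj G (lift v x) (lift v y),
          (lift v x == u) && gadj G v (lift v y)
        | (lift v y == u) && gadj G v (lift v x)])).

Inductive minor_of (G : graph) : graph -> Prop :=
| MO_refl : minor_of G G
| MO_step (G' G'' : graph) : minor_of G G' -> minor_step G' G'' -> minor_of G G''.

Definition has_minor (G H : graph) : Prop :=
  exists G', minor_of G G' /\ graph_iso G' H.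

Definition K33 : graph :=
  @Graph 6 (fun x y => (x < 3)%N != (y < 3)%N).

Definition add_edge (G : graph) (u v : 'I_(gn G)) : graph :=
  @Graph (gn G) (fun x y =>
    gadj G x y || [&& x == u & y == v] || [&& x == v & y == u]).

Definition K33_minor_free (G : graph) : Prop := ~ has_minor G K33.

Definition edge_maximal_K33_minor_free (G : graph) : Prop :=
  K33_minor_free G /\
  forall u v : 'I_(gn G), u != v -> ~~ gadj G u v ->
    has_minor (add_edge u v) K33.

Definition deg n (e : rel 'I_n) (v : 'I_n) : nat := #|[pred u | e v u]|.
Definition Delta n (e : rel 'I_n) : nat := \max_(v : 'I_n) deg e v.

Definition signless_laplacian (R : realType) n (e : rel 'I_n) : 'M[R]_n :=
  (\matrix_(i, j) (if i == j then (deg e i)%:R else (e i j)%:R))%R.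

Definition q_index (R : realType) n (e : rel 'I_n) : R :=
  sup [set a : R | eigenvalue (signless_laplacian R e) a].

(* Main.v *)
Require Import Defs.
From HB Require Import structures.
From mathcomp Require Import all_boot all_order all_algebra.
From mathcomp Require Import classical_sets reals.
From mathcomp Require Import boolp ring lra zify.
Set Implicit Arguments. Unset Strict Implicit. Unset Printing Implicit Defensive.
Import Order.TTheory GRing.Theory Num.Theory.
Lemma minor_of_trans G1 G2 G3 : minor_of G1 G2 -> minor_of G2 G3 -> minor_of G1 G3.
Proof. move=> h12; elim=> [|G' G'' _ IH st]; first exact: h12. exact: MO_step IH st. Qed.

Lemma has_minor_step G G' H : minor_step G G' -> has_minor G' H -> has_minor G H.
Proof.
move=> st [G'' [m iso]]; exists G''; split=> //.
apply: minor_of_trans m; exact: MO_step (MO_refl G) st.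
Qed.

Definition K33adj (i j : 'I_6) := (i < 3)%N != (j < 3)%N.

Definition pres (G : graph) (f : 'I_6 -> 'I_(gn G)) :=
  forall i j, K33adj i j -> gadj G (f i) (f j).

Lemma phase2 k (G : graph) (f : 'I_6 -> 'I_(gn G)) :
  (#|[set p : 'I_(gn G) * 'I_(gn G) | gadj G p.1 p.2]| <= k)%N ->
  bijective f -> pres f -> has_minor G K33.
Proof.
elim: k G f => [|k IH] G f.
- rewrite leqn0 => /eqP /card0_eq E [g fK gK] pf.
  exists G; split; first exact: MO_refl.
  exists g; split; first by exists f.
  move=> x y; have := E (x, y); rewrite inE /= => ->.
  apply/negbTE/negP => kxy.
  have := pf _ _ kxy; rewrite !gK.
  by have := E (x, y); rewrite inE /= => ->.
- move=> Hk fb pf.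
  case: (fb) => g fK gK.
  case: (boolP [exists x, exists y, gadj G x y && ~~ K33adj (g x) (g y)]).
  + case/existsP=> x /existsP [y /andP [exy nk]].
    pose G' := @Graph (gn G)
      (fun a b => gadj G a b && ~~ ([&& a == x & b == y] || [&& a == y & b == x])).
    apply: (has_minor_step (MS_del_edge exy)).
    apply: (IH G' f) => //.
    * rewrite /G' /= -ltnS; apply: leq_trans Hk; apply: proper_card; apply/properP; split.

        by apply/fintype.subsetP=> [[a b]]; rewrite !inE /= => /andP [].
      by exists (x, y); rewrite !inE /= ?exy // !eqxx.
    * move=> i j kij; rewrite /G' /= pf //=.
      apply/negP=> /orP [] /andP [/eqP ex /eqP ey]; move: nk.
        by rewrite -ex -ey !fK kij.
      by rewrite -ex -ey !fK /K33adj eq_sym; move: kij; rewrite /K33adj => ->.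
  + rewrite negb_exists => /forallP E.
    exists G; split; first exact: MO_refl.
    exists g; split; first by exists f.
    move=> x y; have := E x; rewrite negb_exists => /forallP /(_ y).
    rewrite negb_and negbK => H.
    apply/idP/idP => [kxy|gxy].
      by have := pf _ _ kxy; rewrite !gK.
    by move: H; rewrite gxy.
Qed.
Lemma phase1 k (G : graph) (f : 'I_6 -> 'I_(gn G)) :
  (gn G <= k + 6)%N -> injective f -> pres f -> has_minor G K33.
Proof.
elim: k G f => [|k IH] G f Hk finj pf.
all: case: (boolP [forall z, z \in codom f]) => [/forallP allc | ].
1,3: pose g z := iinv (allc z);
  apply: (@phase2 #|[set p : 'I_(gn G) * 'I_(gn G) | gadj G p.1 p.2]| G f) => //;
  exists g => [i|z]; [apply: finj; rewrite f_iinv // | exact: f_iinv].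
all: rewrite negb_forall => /existsP [z nz].
- exfalso.
  have : (#|codom f| < #|'I_(gn G)|)%N.
    apply: proper_card; apply/properP; split; first by apply/fintype.subsetP.
    by exists z.
  by rewrite card_codom // !card_ord; move: Hk; rewrite add0n; lia.
- have ex : forall i, exists j : 'I_(gn G).-1, lift z j = f i.
    move=> i; have nzi : z != f i.
      by apply/eqP=> ezi; move: nz; rewrite ezi codom_f.
    by case: (unlift_some nzi) => j -> _; exists j.
  case: (fin_all_exists ex) => f' Hf'.
  pose G' := @Graph (gn G).-1 (fun x y => gadj G (lift z x) (lift z y)).
  apply: (has_minor_step (MS_del_vertex z)).
  apply: (IH G' f') => /=.
  + by move: Hk; lia.
  + by move=> i j /(congr1 (lift z)); rewrite !Hf' => /finj.
  + by move=> i j kij /=; rewrite !Hf'; apply: pf.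
Qed.

Lemma K33_sub n (e : rel 'I_n) (f : 'I_6 -> 'I_n) :
  injective f -> (forall i j, K33adj i j -> e (f i) (f j)) ->
  has_minor (@Graph n e) K33.
Proof.
move=> finj pf; apply: (@phase1 n (@Graph n e) f) => //=.
by rewrite leq_addr.
Qed.
Lemma codeg3 n (e : rel 'I_n) (Hsym : symmetric e) (Hirr : irreflexive e)
  (free : K33_minor_free (@Graph n e)) (v : 'I_n)
  (dom : forall u, u != v -> e v u) (u w : 'I_n) :
  u != v -> w != v -> u != w -> (#|[set z | e u z && e w z]| <= 3)%N.
Proof.
move=> uv wv uw; rewrite leqNgt; apply/negP => H4.
pose S := [set z | e u z && e w z & z != v].
have HS : (3 <= #|S|)%N.
  have : [set z | e u z && e w z] \subset v |: S.
    apply/fintype.subsetP=> z; rewrite !inE; case: (z =P v) => //= _ -> //.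
  move/subset_leq_card; rewrite cardsU1; move: H4; case: (v \in S) => /=; lia.
pose s := enum S.
have us : uniq s by apply: enum_uniq.
have ss : (3 <= size s)%N by rewrite -cardE.
have inS : forall i, (i < 3)%N -> nth v s i \in S.
  by move=> i hi; rewrite -mem_enum; apply: mem_nth; apply: leq_trans ss.
set a := nth v s 0; set b := nth v s 1; set c := nth v s 2.
have := inS 0%N erefl; have := inS 1%N erefl; have := inS 2%N erefl.
rewrite !inE -/a -/b -/c => /andP [/andP [uc wc] cv] /andP [/andP [ub wb] bv] /andP [/andP [ua wa] av].
have ab : a != b by rewrite /a /b nth_uniq //; apply: leq_trans ss.
have ac : a != c by rewrite /a /c nth_uniq //; apply: leq_trans ss.
have bc : b != c by rewrite /b /c nth_uniq //; apply: leq_trans ss.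
have neq : forall x y, e x y -> x != y.
  by move=> x y exy; apply/eqP => exy'; move: exy; rewrite exy' Hirr.
pose l := [:: v; u; w; a; b; c].
have ul : uniq l.
  rewrite /l /= !inE !negb_or.
  rewrite ![v == _]eq_sym uv wv av bv cv /=.
  rewrite uw (neq _ _ ua) (neq _ _ ub) (neq _ _ uc) /=.
  by rewrite (neq _ _ wa) (neq _ _ wb) (neq _ _ wc) ab ac bc.
pose f (i : 'I_6) := nth v l i.
apply: free; apply: (@K33_sub n e f).
  move=> i j /eqP; rewrite /f nth_uniq //; first by move/eqP/val_inj.
have dva := dom _ av; have dvb := dom _ bv; have dvc := dom _ cv.
have dav : e a v by rewrite Hsym.
have dbv : e b v by rewrite Hsym.
have dcv : e c v by rewrite Hsym.
have dau : e a u by rewrite Hsym.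
have dbu : e b u by rewrite Hsym.
have dcu : e c u by rewrite Hsym.
have daw : e a w by rewrite Hsym.
have dbw : e b w by rewrite Hsym.
have dcw : e c w by rewrite Hsym.
move=> [[|[|[|[|[|[|i]]]]]] Hi] [[|[|[|[|[|[|j]]]]]] Hj] //=; rewrite /K33adj /= => // _.
all: by rewrite /f /l /=.
Qed.
Lemma collatz (F : realFieldType) n (M : 'M[F]_n) (x : 'I_n -> F) (c a : F) :
  (forall i j, 0 <= M i j)%R -> (forall j, 0 < x j)%R ->
  (forall j, \sum_i M i j * x i <= c * x j)%R -> eigenvalue M a -> (a <= c)%R.
Proof.
move=> M0 x0 Hc /eigenvalueP [v Hv vn0].
have [j1 hj1] : exists j, v ord0 j != 0%R.
  apply/existsP; apply: contraNT vn0; rewrite negb_exists => /forallP H.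
  apply/eqP/rowP => j; rewrite mxE; by move: (H j); rewrite negbK => /eqP.
pose r j := (`|v ord0 j| / x j)%R.
have [j _ Hj0] := @Order.TotalTheory.arg_maxP _ F _ j1 xpredT r isT.
have rpos : (0 < r j)%R.
  apply: lt_le_trans (Hj0 j1 isT); rewrite /r divr_gt0 ?normr_gt0 //.
have vj : (`|v ord0 j| = r j * x j)%R by rewrite /r divfK // gt_eqF.
have vjpos : (0 < `|v ord0 j|)%R by rewrite vj mulr_gt0.
have ev : (a * v ord0 j = \sum_i v ord0 i * M i j)%R.
  by have := congr1 (fun m : 'rV[F]_n => m ord0 j) Hv; rewrite !mxE => <-.
have : (`|a| * `|v ord0 j| <= c * `|v ord0 j|)%R.
  rewrite -normrM ev; apply: le_trans (ler_norm_sum _ _ _) _.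
  apply: le_trans (_ : \sum_i r j * (M i j * x i) <= _)%R.
    apply: ler_sum => i _; rewrite normrM (ger0_norm (M0 i j)).
    rewrite mulrCA mulrC ler_wpM2l //.
    move: (Hj0 i isT) => /=; rewrite {1}/r ler_pdivrMr //.
  rewrite -mulr_sumr vj mulrCA ler_wpM2l //; exact: ltW.
rewrite ler_pM2r // => Ha; apply: le_trans Ha; exact: ler_norm.
Qed.

Lemma sup_le_c (R : realType) (E : set R) (c : R) :
  (0 <= c)%R -> (forall a, E a -> a <= c)%R -> (sup E <= c)%R.
Proof.
move=> c0 H; case: (pselect (exists a, E a)) => [ne|ne].
  by apply: ge_sup.
have -> : E = set0.
  by rewrite predeqE => a; split=> // Ea; apply: ne; exists a.
by rewrite sup0.
Qed.
Record good n (e : rel 'I_n) (v : 'I_n) : Prop := Good {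
  g_sym : symmetric e;
  g_irr : irreflexive e;
  g_dom : forall u, u != v -> e v u;
  g_deg : forall u, u != v -> (deg e u <= n - 2)%N;
  g_cod : forall u w, u != v -> w != v -> u != w -> (#|[set z | e u z && e w z]| <= 3)%N;
  g_n : (1186 <= n)%N }.
Arguments good : clear implicits.

Lemma cardsumE n (P : pred 'I_n) : #|[set y | P y]| = (\sum_y (P y : nat))%N.
Proof.
rewrite -sum1_card big_mkcond /=; apply: eq_bigr => y _; rewrite inE; by case: (P y).
Qed.

Lemma degE n (e : rel 'I_n) u : deg e u = (\sum_z (e u z : nat))%N.
Proof.
rewrite /deg -sum1_card big_mkcond /=; apply: eq_bigr => y _; rewrite !inE; by case: (e u y).
Qed.

Lemma F3 n e v (G : good n e v) u : u != v ->
  (\sum_(y | e u y) deg e y <= 2 * deg e u + 3 * (n - 2))%N.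
Proof.
case: G => Hsym Hirr dom _ cod _ uv.
have -> : (\sum_(y | e u y) deg e y = \sum_z #|[set y | e u y && e z y]|)%N.
  rewrite (eq_bigr (fun y => \sum_z (e y z : nat))%N); last by move=> y _; rewrite degE.
  rewrite exchange_big /=.
  apply: eq_bigr => z _.
  rewrite cardsumE big_mkcond /=; apply: eq_bigr => y _.
  by case: (e u y) => //=; rewrite Hsym.
rewrite (bigD1 u) //= (bigD1 v) //=; last by rewrite eq_sym.
have c1 : #|[set y | e u y && e u y]| = deg e u.
  rewrite /deg; apply: eq_card => y; by rewrite !inE andbb.
have c2 : (#|[set y | e u y && e v y]| <= deg e u)%N.
  rewrite /deg; apply: subset_leq_card; apply/fintype.subsetP => y.
  by rewrite !inE => /andP [].
have c3 : (\sum_(i | (i != u) && (i != v)) #|[set y | e u y && e i y]| <= 3 * (n - 2))%N.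
  apply: leq_trans (_ : \sum_(i | (i != u) && (i != v)) 3 <= _)%N.
    apply: leq_sum => z /andP [zu zv]; apply: cod => //; by rewrite eq_sym.
  rewrite sum_nat_const mulnC leq_mul2l /=.
  have : (#|[pred i | (i != u) && (i != v)]| + 2 <= #|'I_n|)%N.
    rewrite -(cardC [pred i | (i != u) && (i != v)]).
    rewrite leq_add2l; apply: (@leq_trans #|[set u; v]|).
      by rewrite cards2 uv.
    apply: subset_leq_card; apply/fintype.subsetP => z; rewrite !inE.
    by rewrite negb_and !negbK.
  rewrite card_ord.
  have -> : #|(fun i : 'I_n => (i != u) && (i != v))| = #|[pred i | (i != u) && (i != v)]|.
    by apply: eq_card.
  lia.
rewrite c1; apply: (leq_trans (leq_add (leqnn _) (leq_add c2 c3))); lia.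
Qed.
Lemma card_neq n (v : 'I_n) : #|[pred u | u != v]| = n.-1.
Proof.
have := cardC [pred u | u != v]; rewrite card_ord.
have -> : #|[predC [pred u | u != v]]| = 1.
  rewrite -(card1 v); apply: eq_card => u; by rewrite !inE negbK.
by move/(congr1 predn); rewrite addn1.
Qed.

Lemma degv n e v (G : good n e v) : deg e v = n.-1.
Proof.
rewrite -(card_neq v); apply: eq_card => u; rewrite !inE.
case: (u =P v) => [->|/eqP uv] /=; first by rewrite (g_irr G).
exact: (g_dom G).
Qed.

Lemma F1 n e v (G : good n e v) u : u != v -> (1 <= deg e u)%N.
Proof.
move=> uv; apply/card_gt0P; exists v; rewrite inE.
by rewrite (g_sym G); apply: (g_dom G).
Qed.

Lemma F2 n e v (G : good n e v) y w : y != v -> w != v -> y != w ->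
  (deg e y + deg e w <= n + 3)%N.
Proof.
move=> yv wv yw; rewrite /deg -cardUI.
have := g_cod G yv wv yw.
have -> : #|[set z | e y z && e w z]| = #|[predI [pred u | e y u] & [pred u | e w u]]|.
  by apply: eq_card => z; rewrite !inE.
have := max_card [predU [pred u | e y u] & [pred u | e w u]]; rewrite card_ord.
move=> h1 h2; exact: leq_add h1 h2.
Qed.

Lemma F3' n e v (G : good n e v) u : u != v ->
  (\sum_(y | e u y && (y != v)) deg e y + n.-1 <= 2 * deg e u + 3 * (n - 2))%N.
Proof.
move=> uv; have := F3 G uv; rewrite (bigD1 v) /=; last by rewrite (g_sym G) (g_dom G).
by rewrite (degv G) addnC.
Qed.

Lemma cnt_nbr n e v (G : good n e v) u : u != v ->
  #|[pred y | e u y && (y != v)]| = (deg e u).-1.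
Proof.
move=> uv; rewrite /deg (cardD1 v [pred y | e u y]) !inE (g_sym G) (g_dom G) //=.
rewrite add0n; apply: eq_card => y; by rewrite !inE andbC.
Qed.

Lemma F5 n e v (G : good n e v) :
  (37 * \sum_(u | u != v) deg e u <= n.-1 * (2 * n + 395))%N.
Proof.
set T := (\sum_(u | u != v) deg e u)%N.
have sq : (\sum_u deg e u * deg e u = \sum_u \sum_(y | e u y) deg e y)%N.
  have -> : (\sum_u \sum_(y | e u y) deg e y = \sum_u \sum_y (e u y : nat) * deg e y)%N.
    apply: eq_bigr => u _; rewrite big_mkcond /=; apply: eq_bigr => y _.
    by case: (e u y); rewrite ?mul1n ?mul0n.
  rewrite exchange_big /=; apply: eq_bigr => y _.
  rewrite -big_distrl /= {1}degE; congr (_ * _); apply: eq_bigr => u _.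
  by rewrite (g_sym G).
have Tv : (\sum_(y | e v y) deg e y = T)%N.
  apply: eq_bigl => y; case: (y =P v) => [->|/eqP yv]; first by rewrite (g_irr G).
  by rewrite (g_dom G).
have H1 : (\sum_u deg e u * deg e u <= T + \sum_(u | u != v) (2 * deg e u + 3 * (n - 2)))%N.
  rewrite sq (bigD1 v) //= Tv leq_add2l; apply: leq_sum => u uv.
exact: (@F3 n e v G u uv).
rewrite big_split /= -big_distrr /= sum_nat_const card_neq -/T in H1.
rewrite (bigD1 v) //= (degv G) in H1.
have H2 : (\sum_(u | u != v) 40 * deg e u <= \sum_(u | u != v) (deg e u * deg e u + 400))%N.
  apply: leq_sum => u _; case: (leqP (deg e u) 20) => h; nia.
rewrite -big_distrr /= big_split /= sum_nat_const card_neq -/T in H2.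
have n1 : (1186 <= n)%N := g_n G.
lia.
Qed.
Definition cA (R : realFieldType) : R := (51%:R / 50%:R)%R.
Definition cg (R : realFieldType) : R := (7%:R / 10%:R)%R.
Definition cC (R : realFieldType) (N : R) : R := (2 * cA R / (N - 3))%R.

Lemma I2 (R : realFieldType) (N h : R) : (1186 <= N)%R -> (0 <= h)%R ->
  (1 + 2 / (N + 1) * (cA R * h + 2 * cg R + cC N * (2 * h + 2 * N - 3))
     <= cA R + cC N * h)%R.
Proof.
move=> HN h0.
have N3 : (N - 3 != 0)%R by rewrite gt_eqF //; lra.
have N1 : (N + 1 != 0)%R by rewrite gt_eqF //; lra.
rewrite -subr_ge0 /cC /cA /cg.
have -> : (51%:R / 50%:R + 2 * (51%:R / 50%:R) / (N - 3) * h -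
   (1 + 2 / (N + 1) * (51%:R / 50%:R * h + 2 * (7%:R / 10%:R) +
     2 * (51%:R / 50%:R) / (N - 3) * (2 * h + 2 * N - 3)))
   = (N * N - 550%:R * N + 1029%:R) / (50%:R * (N + 1) * (N - 3)) :> R)%R.
  by field; rewrite N3 N1.
apply: divr_ge0; nra.
Qed.
Lemma I3 (R : realFieldType) (N d : R) : (1186 <= N)%R -> (1 <= d)%R -> (d <= N - 2)%R ->
  (1 + (cA R + cg R) + 2 * cC N / (N + 1) * (2 * d + 2 * N - 5) <= (N + 2 - d) * cg R)%R.
Proof.
move=> HN d1 d2.
have N3 : (0 < N - 3)%R by lra.
have N1 : (0 < N + 1)%R by lra.
have C0 : (0 <= 2 * cC N / (N + 1))%R.
  by rewrite /cC /cA; apply: divr_ge0; [apply: mulr_ge0; [lra|apply: divr_ge0; lra]|lra].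
apply: (@le_trans _ _ (1 + (cA R + cg R) + 2 * cC N / (N + 1) * (4 * N - 9))%R).
  rewrite lerD2l; apply: ler_wpM2l => //; lra.
apply: (@le_trans _ _ (4 * cg R)%R); last by rewrite ler_wpM2r /cg; lra.
rewrite -subr_ge0 /cC /cA /cg.
have N3' : (N - 3 != 0)%R by rewrite gt_eqF.
have N1' : (N + 1 != 0)%R by rewrite gt_eqF.
have -> : (4 * (7%:R / 10%:R) - (1 + (51%:R / 50%:R + 7%:R / 10%:R) +
   2 * (2 * (51%:R / 50%:R) / (N - 3)) / (N + 1) * (4 * N - 9))
   = (4%:R * N * N - 824%:R * N + 1824%:R) / (50%:R * (N + 1) * (N - 3)) :> R)%R.
  by field; rewrite N3' N1'.
apply: divr_ge0; nra.
Qed.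

Definition kap (R : realFieldType) (N : R) : R :=
  (2 * cA R / ((N + 1) * (N + 1)) + 2 * cC N / (N + 1))%R.

Lemma I4 (R : realFieldType) (N T : R) : (1186 <= N)%R -> (0 <= T)%R ->
  (37%:R * T <= (N - 1) * (2 * N + 395%:R))%R ->
  (2 * cg R + (N - 2) * (cA R / (N + 1)) + kap N * T <= 3)%R.
Proof.
move=> HN T0 HT.
have N3 : (0 < N - 3)%R by lra.
have N1 : (0 < N + 1)%R by lra.
have N3' : (N - 3 != 0)%R by rewrite gt_eqF.
have N1' : (N + 1 != 0)%R by rewrite gt_eqF.
have k1 : (kap N <= 6%:R * cA R / ((N - 3) * (N + 1)))%R.
  rewrite /kap /cC -subr_ge0.
  have -> : (6%:R * cA R / ((N - 3) * (N + 1)) -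
     (2 * cA R / ((N + 1) * (N + 1)) + 2 * (2 * cA R / (N - 3)) / (N + 1))
     = 2 * cA R * 4%:R / ((N - 3) * (N + 1) * (N + 1)) :> R)%R.
    by field; rewrite N3' N1'.
  apply: divr_ge0; rewrite /cA; last by nra.
  apply: mulr_ge0 => //; apply: mulr_ge0 => //; apply: divr_ge0; lra.
have k0 : (0 <= kap N)%R.
  rewrite /kap /cC /cA; apply: addr_ge0; apply: divr_ge0; try nra.
  by apply: mulr_ge0; [lra | apply: divr_ge0; lra].
apply: (@le_trans _ _ (2 * cg R + (N - 2) * (cA R / (N + 1)) +
     6%:R * cA R / ((N - 3) * (N + 1)) * ((N - 1) * (2 * N + 395%:R) / 37%:R))%R).
  rewrite lerD2l; apply: le_trans (_ : _ <= 6%:R * cA R / ((N - 3) * (N + 1)) * T)%R _.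
    by apply: ler_wpM2r.
  apply: ler_wpM2l; first by apply: le_trans k1.
  by rewrite ler_pdivlMr; lra.
rewrite -subr_ge0 /cA /cg.
have -> : (3 - (2 * (7%:R / 10%:R) + (N - 2) * (51%:R / 50%:R / (N + 1)) +
      6%:R * (51%:R / 50%:R) / ((N - 3) * (N + 1)) * ((N - 1) * (2 * N + 395%:R) / 37%:R))
  = ((3 - 2 * (7%:R / 10%:R)) * 37%:R * 50%:R * (N - 3) * (N + 1)
      - (N - 2) * 51%:R * 37%:R * (N - 3) - 6%:R * 51%:R * (N - 1) * (2 * N + 395%:R))
     / (37%:R * 50%:R * (N - 3) * (N + 1)) :> R)%R.
  by field; rewrite N3' N1'.
apply: divr_ge0; nra.
Qed.

Lemma P1 (R : realFieldType) (N h : R) : (1186 <= N)%R -> (0 <= h)%R -> (2 * h <= N + 1)%R ->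
  ((cA R + cC N * h) / (N + 1 - h) <= cA R / (N + 1) + kap N * h)%R.
Proof.
move=> HN h0 h1.
have N3 : (0 < N - 3)%R by lra.
have N1 : (0 < N + 1)%R by lra.
have D0 : (0 < N + 1 - h)%R by lra.
have C0 : (0 <= cC N)%R by rewrite /cC /cA; apply: divr_ge0; lra.
have e1 : ((cA R + cC N * h) / (N + 1 - h) = cA R / (N + 1 - h) + cC N * h / (N + 1 - h))%R.
  by rewrite mulrDl.
have e2 : (cA R / (N + 1) + kap N * h = (cA R / (N + 1) + 2 * cA R / ((N + 1) * (N + 1)) * h)
     + 2 * cC N / (N + 1) * h)%R.
  by rewrite /kap mulrDl addrA.
rewrite e1 e2; apply: lerD.
  rewrite ler_pdivrMr // -subr_ge0.
  have -> : ((cA R / (N + 1) + 2 * cA R / ((N + 1) * (N + 1)) * h) * (N + 1 - h) - cA R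
     = cA R * h * (N + 1 - 2 * h) / ((N + 1) * (N + 1)) :> R)%R.
    by field; rewrite gt_eqF.
  apply: divr_ge0; last by nra.
  by apply: mulr_ge0; [apply: mulr_ge0 => //; rewrite /cA; lra | lra].
rewrite ler_pdivrMr // -subr_ge0.
have -> : (2 * cC N / (N + 1) * h * (N + 1 - h) - cC N * h
   = cC N * h * (N + 1 - 2 * h) / (N + 1) :> R)%R.
  by field; rewrite gt_eqF.
apply: divr_ge0; last by lra.
by apply: mulr_ge0; [exact: mulr_ge0 | lra].
Qed.
Definition xf (R : realType) n (e : rel 'I_n) (v w : 'I_n) (i : 'I_n) : R :=
  if i == v then 1%R else if i == w then cg R else
  ((cA R + cg R * (e i w)%:R + cC (n%:R) * ((deg e i)%:R - 1)) /
     (n%:R + 1 - ((deg e i)%:R - 1)))%R.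

Lemma colsumE (R : realType) n (e : rel 'I_n) (Hsym : symmetric e) (Hirr : irreflexive e)
  (x : 'I_n -> R) j :
  (\sum_i signless_laplacian R e i j * x i = (deg e j)%:R * x j + \sum_(i | e j i) x i)%R.
Proof.
rewrite (bigD1 j) //= mxE eqxx; congr (_ + _)%R.
rewrite [RHS]big_mkcond [LHS]big_mkcond /=; apply: eq_bigr => i _.
rewrite mxE; case: (i =P j) => [->|/eqP ij] /=; first by rewrite Hirr.
rewrite Hsym; case: (e j i) => /=; by rewrite ?mul1r ?mul0r.
Qed.

Lemma sum_split1 (R : realType) n (P : pred 'I_n) (F : 'I_n -> R) w :
  (\sum_(i | P i) F i = (if P w then F w else 0) + \sum_(i | P i && (i != w)) F i)%R.
Proof.
case: (boolP (P w)) => Pw.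
  by rewrite (bigD1 w).
rewrite add0r; apply: eq_bigl => i; case: (i =P w) => [->|_]; by rewrite ?andbT ?(negbTE Pw).
Qed.

Lemma facts_i n e v w (G : good n e v) (wv : w != v)
  (wmax : forall u, u != v -> (deg e u <= deg e w)%N) i :
  i != v -> i != w ->
  [/\ (1 <= deg e i)%N, (2 * deg e i <= n + 3)%N & (deg e i + deg e w <= n + 3)%N].
Proof.
move=> iv iw; have h1 := F1 G iv; have h2 := F2 G iv wv iw; have h3 := wmax i iv.
split => //; lia.
Qed.

Lemma xT1 (R : realType) n e v w (G : good n e v) (wv : w != v)
  (wmax : forall u, u != v -> (deg e u <= deg e w)%N) i :
  i != v -> i != w ->
  (0 <= xf R e v w i /\
   xf R e v w i <= 2 / (n%:R + 1) * (cA R + cg R * (e i w)%:R + cC (n%:R) * ((deg e i)%:R - 1)))%R.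
Proof.
move=> iv iw; case: (facts_i G wv wmax iv iw) => d1 d2 d3.
have HN : (1186 <= n%:R :> R)%R.
  have := g_n G; rewrite -(ler_nat R) => h; apply: le_trans h; lra.
have d1' : (1 <= (deg e i)%:R :> R)%R by rewrite ler1n.
have d2' : (2 * (deg e i)%:R <= n%:R + 3 :> R)%R.
  by move: d2; rewrite -(ler_nat R) natrM natrD => h; lra.
rewrite /xf (negbTE iv) (negbTE iw).
have C0 : (0 <= cC (n%:R : R))%R by rewrite /cC /cA; apply: divr_ge0; lra.
have g0 : (0 <= cg R * (e i w)%:R)%R by apply: mulr_ge0; rewrite /cg ?ler0n //; lra.
have num0 : (0 <= cA R + cg R * (e i w)%:R + cC (n%:R) * ((deg e i)%:R - 1))%R.
  apply: addr_ge0; [apply: addr_ge0 => //; rewrite /cA; lra | apply: mulr_ge0 => //; lra].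
have D0 : (0 < n%:R + 1 - ((deg e i)%:R - 1) :> R)%R by lra.
split; first exact: divr_ge0 (ltW D0).
rewrite mulrC; apply: ler_wpM2r => //.
rewrite ler_pdivlMr; last lra.
rewrite mulrC ler_pdivrMr //; lra.
Qed.
Lemma sum_sub (R : realType) n (P Q : pred 'I_n) (F : 'I_n -> R) :
  (forall i, P i -> Q i) -> (forall i, Q i -> 0 <= F i)%R ->
  (\sum_(i | P i) F i <= \sum_(i | Q i) F i)%R.
Proof.
move=> PQ F0; rewrite [X in (X <= _)%R]big_mkcond [X in (_ <= X)%R]big_mkcond /=.
apply: ler_sum => i _; case: (boolP (P i)) => Pi; first by rewrite (PQ _ Pi).
by case: (boolP (Q i)) => Qi //; apply: F0.
Qed.

Lemma sum_const_card (R : realType) n (Q : pred 'I_n) (c : R) :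
  (\sum_(i | Q i) c = (#|[set i | Q i]|)%:R * c)%R.
Proof.
rewrite cardsumE natr_sum mulr_suml big_mkcond /=; apply: eq_bigr => i _.
by case: (Q i); rewrite ?mul1r ?mul0r.
Qed.

Lemma sum_natr (R : realType) n (Q : pred 'I_n) (F : 'I_n -> nat) :
  (\sum_(i | Q i) (F i)%:R = (\sum_(i | Q i) F i)%N%:R :> R)%R.
Proof. by rewrite natr_sum. Qed.

Lemma card_Q1 n e v (G : good n e v) j : j != v ->
  (#|[set i | e j i && (i != v)]| + 1 = deg e j)%N.
Proof.
move=> jv; have := cnt_nbr G jv; have := F1 G jv.
have -> : #|[set i | e j i && (i != v)]| = #|[pred y | e j y && (y != v)]|.
  by apply: eq_card => i; rewrite !inE.
move=> h ->; lia.
Qed.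

Lemma card_Q2 n e v (G : good n e v) j w : j != v -> w != v -> j != w ->
  (#|[set i | e j i && e w i && (i != v)]| <= 2)%N.
Proof.
move=> jv wv jw; have := g_cod G jv wv jw.
have : [set i | e j i && e w i && (i != v)] \proper [set z | e j z && e w z].
  apply/properP; split.
    by apply/fintype.subsetP => i; rewrite !inE => /andP [].
  exists v; rewrite !inE ?eqxx ?andbF //.
  by rewrite !(g_sym G _ v) !(g_dom G).
move/proper_card; lia.
Qed.
Lemma realNN n e v (G : good n e v) (R : realType) : (1186 <= n%:R :> R)%R.
Proof. have := g_n G; rewrite -(ler_nat R) => h; apply: le_trans h; lra. Qed.

Lemma split_v (R : realType) n e v (G : good n e v) w j : j != v ->
  (\sum_(i | e j i) xf R e v w i = 1 + \sum_(i | e j i && (i != v)) xf R e v w i)%R.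
Proof.
move=> jv; rewrite (bigD1 v) /=; last by rewrite (g_sym G) (g_dom G).
by rewrite /xf eqxx.
Qed.

Lemma row_gen (R : realType) n e v w (G : good n e v) (wv : w != v)
  (wmax : forall u, u != v -> (deg e u <= deg e w)%N) j :
  j != v -> j != w ->
  (\sum_(i | e j i) xf R e v w i <=
     cA R + cg R * (e j w)%:R + cC (n%:R) * ((deg e j)%:R - 1))%R.
Proof.
move=> jv jw.
have HN := realNN G R.
set N : R := (n%:R)%R in HN *.
set dj : R := ((deg e j)%:R)%R.
have C0 : (0 <= cC N)%R by rewrite /cC /cA; apply: divr_ge0; lra.
have g0 : (0 <= cg R)%R by rewrite /cg; lra.
have A0 : (0 <= cA R)%R by rewrite /cA; lra.
rewrite (split_v _ G) // (sum_split1 _ _ w) /= wv andbT.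
have -> : ((if e j w then xf R e v w w else 0) = cg R * (e j w)%:R)%R.
  by rewrite /xf (negbTE wv) eqxx; case: (e j w); rewrite ?mulr1 ?mulr0.
set P' := fun i => (e j i && (i != v)) && (i != w).
set Q1 := fun i => e j i && (i != v).
have S1 : (\sum_(i | P' i) xf R e v w i <=
    2 / (N + 1) * (\sum_(i | Q1 i) cA R + cg R * \sum_(i | e j i && e w i && (i != v)) 1
                    + cC N * \sum_(i | Q1 i) (deg e i)%:R))%R.
  apply: le_trans (_ : \sum_(i | P' i) 2 / (N + 1) *
      (cA R + cg R * (e i w)%:R + cC N * ((deg e i)%:R - 1)) <= _)%R.
    apply: ler_sum => i /andP [/andP [_ iv] iw].
    by case: (xT1 R G wv wmax iv iw).
  rewrite -mulr_sumr; apply: ler_wpM2l.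
    apply: divr_ge0; lra.
  rewrite big_split big_split /= -!mulr_sumr.
  apply: lerD; first apply: lerD.
  - apply: ler_wpM2l; first lra.
    apply: sum_sub => [i|i _]; [by rewrite /P' /Q1 => /andP [] | lra].
  - apply: ler_wpM2l => //.
    rewrite [X in (X <= _)%R]big_mkcond [X in (_ <= X)%R]big_mkcond /=.
    apply: ler_sum => i _; rewrite /P'.
    case: (boolP (e j i)) => //= eji; case: (boolP (i != v)) => //= iv;
      case: (boolP (i != w)) => //= iw; rewrite ?andbT ?andbF //;
      try (rewrite (g_sym G i w)); by case: (e w i).
  - apply: ler_wpM2l => //.
    apply: le_trans (_ : \sum_(i | Q1 i) ((deg e i)%:R - 1) <= _)%R.
      apply: sum_sub => [i|i]; first by rewrite /P' /Q1 => /andP [].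
      rewrite /Q1 => /andP [_ iv]; have := F1 G iv; rewrite -(ler_nat R) => h; lra.
    apply: ler_sum => i _; lra.
have c1 : (\sum_(i | Q1 i) cA R = (dj - 1) * cA R)%R.
  rewrite sum_const_card; congr (_ * _)%R.
  have := card_Q1 G jv; rewrite -/Q1 => h.
  rewrite /dj -h natrD; lra.
have c2 : (\sum_(i | e j i && e w i && (i != v)) (1 : R) <= 2)%R.
  rewrite sum_const_card mulr1.
  have := card_Q2 G jv wv jw; rewrite -(ler_nat R) => h; apply: le_trans h; lra.
have c3 : (\sum_(i | Q1 i) (deg e i)%:R <= 2 * dj + 2 * N - 5 :> R)%R.
  rewrite sum_natr.
  have := F3' G jv; rewrite -/Q1 -(ler_nat R) !natrD => h.
  have np : (n.-1%:R = N - 1 :> R)%R.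
    have : (n.-1 + 1 = n)%N by rewrite addn1 prednK // (leq_trans _ (g_n G)).
    move/(congr1 (fun k => (k%:R)%R : R)); rewrite natrD /N; lra.
  have nm : ((n - 2)%:R = N - 2 :> R)%R.
    have : ((n - 2) + 2 = n)%N by rewrite subnK // (leq_trans _ (g_n G)).
    move/(congr1 (fun k => (k%:R)%R : R)); rewrite natrD /N; lra.
  rewrite np nm in h; rewrite /dj; lra.
have dj1 : (1 <= dj)%R by rewrite /dj ler1n; exact: (F1 G jv).
have I := I2 HN (_ : 0 <= dj - 1)%R.
have I' := I (ltac:(lra)).
have : (2 / (N + 1) * (\sum_(i | Q1 i) cA R + cg R * \sum_(i | e j i && e w i && (i != v)) 1
          + cC N * \sum_(i | Q1 i) (deg e i)%:R)
        <= 2 / (N + 1) * (cA R * (dj - 1) + 2 * cg R + cC N * (2 * (dj - 1) + 2 * N - 3)))%R.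
  apply: ler_wpM2l; first by apply: divr_ge0; lra.
  rewrite c1 mulrC; apply: lerD; first apply: lerD => //.
    by rewrite [X in (_ <= X)%R]mulrC; apply: ler_wpM2l.
  apply: ler_wpM2l => //; lra.
move=> h2.
have := le_trans S1 h2 => h3.
lra.
Qed.
Definition Dd (R : realType) n (e : rel 'I_n) i : R :=
  ((n%:R)%R + 1 - (((deg e i)%:R)%R - 1))%R.

Lemma sumDw (R : realType) n e v w (G : good n e v) (wv : w != v)
  (wmax : forall u, u != v -> (deg e u <= deg e w)%N) :
  (\sum_(i | e w i && (i != v)) (Dd R e i)^-1 <= 1)%R.
Proof.
have HN := realNN G R.
have cQ := card_Q1 G wv.
case: (posnP (deg e w).-1) => [m0|m0].
  have E : #|[set i | e w i && (i != v)]| = 0%N by move: cQ m0; lia.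
  have Z : forall i, (e w i && (i != v)) = false.
    move=> i; apply/negP => h.
    have : i \in [set i | e w i && (i != v)] by rewrite inE.
    by move: E => /eqP; rewrite cards_eq0 => /eqP ->; rewrite inE.
  rewrite big_pred0 //; lra.
set m : R := ((deg e w)%:R - 1)%R.
have m1 : (1 <= m)%R.
  rewrite /m; have : (2 <= deg e w)%N by move: m0; lia.
  rewrite -(ler_nat R) => h; lra.
apply: le_trans (_ : \sum_(i | e w i && (i != v)) m^-1 <= _)%R.
  apply: ler_sum => i /andP [ewi iv].
  have iw : i != w by apply/eqP => iw; move: ewi; rewrite iw (g_irr G).
  case: (facts_i G wv wmax iv iw) => d1 d2 d3.
  have d3' : ((deg e i)%:R + (deg e w)%:R <= n%:R + 3 :> R)%R.
    by move: d3; rewrite -(ler_nat R) !natrD.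
  have d1' : (1 <= (deg e i)%:R :> R)%R by rewrite ler1n.
  have m1' : (1 <= (deg e w)%:R - 1 :> R)%R by [].
  rewrite lef_pV2 ?posrE /Dd /m; lra.
rewrite sum_const_card.
have -> : (#|[set i | e w i && (i != v)]|%:R = m :> R)%R.
  by rewrite /m -cQ natrD; lra.
by rewrite mulfV // gt_eqF //; lra.
Qed.
Lemma np_real n e v (G : good n e v) (R : realType) : (n.-1%:R = n%:R - 1 :> R)%R.
Proof.
have : (n.-1 + 1 = n)%N by rewrite addn1 prednK // (leq_trans _ (g_n G)).
move/(congr1 (fun k => (k%:R)%R : R)); rewrite natrD; lra.
Qed.

Lemma nm_real n e v (G : good n e v) (R : realType) : ((n - 2)%:R = n%:R - 2 :> R)%R.
Proof.
have : ((n - 2) + 2 = n)%N by rewrite subnK // (leq_trans _ (g_n G)).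
move/(congr1 (fun k => (k%:R)%R : R)); rewrite natrD; lra.
Qed.

Lemma sum_deg_bound (R : realType) n e v (G : good n e v) j : j != v ->
  (\sum_(i | e j i && (i != v)) ((deg e i)%:R : R) <=
     2 * (deg e j)%:R + 2 * n%:R - 5)%R.
Proof.
move=> jv; rewrite sum_natr.
have := F3' G jv; rewrite -(ler_nat R) !natrD => h.
rewrite (np_real G R) (nm_real G R) in h; lra.
Qed.

Lemma xf_eq (R : realType) n (e : rel 'I_n) (v w i : 'I_n) : i != v -> i != w ->
  xf R e v w i = ((cA R + cg R * (e i w)%:R + cC (n%:R) * ((deg e i)%:R - 1)) / Dd R e i)%R.
Proof. by move=> iv iw; rewrite /xf (negbTE iv) (negbTE iw). Qed.

Lemma row_w (R : realType) n e v w (G : good n e v) (wv : w != v)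
  (wmax : forall u, u != v -> (deg e u <= deg e w)%N) :
  (\sum_(i | e w i) xf R e v w i <= (n%:R + 2 - (deg e w)%:R) * cg R)%R.
Proof.
have HN := realNN G R.
set N : R := (n%:R)%R in HN *.
have C0 : (0 <= cC N)%R by rewrite /cC /cA; apply: divr_ge0; lra.
have Ag : (0 <= cA R + cg R)%R by rewrite /cA /cg; lra.
rewrite (split_v _ G) //.
apply: le_trans (_ : 1 + ((cA R + cg R) * \sum_(i | e w i && (i != v)) (Dd R e i)^-1
      + 2 * cC N / (N + 1) * \sum_(i | e w i && (i != v)) ((deg e i)%:R - 1)) <= _)%R.
  rewrite lerD2l mulr_sumr mulr_sumr -big_split /=; apply: ler_sum => i /andP [ewi iv].
  have iw : i != w by apply/eqP => iw; move: ewi; rewrite iw (g_irr G).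
  case: (facts_i G wv wmax iv iw) => d1 d2 d3.
  have d1' : (1 <= (deg e i)%:R :> R)%R by rewrite ler1n.
  have d2' : (2 * (deg e i)%:R <= N + 3 :> R)%R.
    by move: d2; rewrite -(ler_nat R) natrM natrD => h; lra.
  rewrite xf_eq // (g_sym G i w) ewi mulr1 mulrDl.
  apply: lerD; first by [].
  have D0 : (0 < Dd R e i)%R by rewrite /Dd; lra.
  have Dinv : ((Dd R e i)^-1 <= 2 / (N + 1))%R.
    rewrite ler_pdivlMr; last lra.
    rewrite mulrC ler_pdivrMr //; rewrite /Dd /N; lra.
  rewrite mulrAC; apply: ler_wpM2r; first lra.
  have -> : (2 * cC N / (N + 1) = cC N * (2 / (N + 1)))%R by ring.
  by apply: ler_wpM2l.
have s1 := sumDw R G wv wmax.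
have s2 := sum_deg_bound R G wv.
have dw1 : (1 <= (deg e w)%:R :> R)%R by rewrite ler1n; exact: (F1 G wv).
have dw2 : ((deg e w)%:R <= N - 2 :> R)%R.
  by have := g_deg G wv; rewrite -(ler_nat R) (nm_real G R).
have I := I3 HN dw1 dw2.
have k0 : (0 <= 2 * cC N / (N + 1))%R by apply: divr_ge0; lra.
have t1 : ((cA R + cg R) * \sum_(i | e w i && (i != v)) (Dd R e i)^-1 <= cA R + cg R)%R.
  by rewrite -[X in (_ <= X)%R]mulr1; apply: ler_wpM2l.
have t2 : (2 * cC N / (N + 1) * \sum_(i | e w i && (i != v)) ((deg e i)%:R - 1)
           <= 2 * cC N / (N + 1) * (2 * (deg e w)%:R + 2 * N - 5))%R.
  apply: ler_wpM2l => //; apply: le_trans s2; apply: ler_sum => i _; lra.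
lra.
Qed.
Lemma card_nvw n (v w : 'I_n) : w != v ->
  (#|[set i | (i != v) && (i != w)]| + 2 = n)%N.
Proof.
move=> wv.
have := cardsC [set v; w]; rewrite cards2 eq_sym wv card_ord.
have -> : ~: [set v; w] = [set i | (i != v) && (i != w)].
  by apply/setP => i; rewrite !inE negb_or.
by rewrite addnC.
Qed.

Lemma row_v (R : realType) n e v w (G : good n e v) (wv : w != v)
  (wmax : forall u, u != v -> (deg e u <= deg e w)%N) :
  (\sum_(i | e v i) xf R e v w i <= 3)%R.
Proof.
have HN := realNN G R.
have C0 : (0 <= cC (n%:R : R))%R by rewrite /cC /cA; apply: divr_ge0; lra.
have g0 : (0 <= cg R)%R by rewrite /cg; lra.
have -> : (\sum_(i | e v i) xf R e v w i = \sum_(i | i != v) xf R e v w i)%R.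
  apply: eq_bigl => i; case: (i =P v) => [->|/eqP iv]; first by rewrite (g_irr G).
  by rewrite (g_dom G).
rewrite (sum_split1 _ _ w) wv.
have -> : xf R e v w w = cg R by rewrite /xf (negbTE wv) eqxx.
set P' := fun i => (i != v) && (i != w).
apply: le_trans (_ : cg R + (\sum_(i | P' i) cA R / (n%:R + 1)
     + kap (n%:R) * \sum_(i | i != v) ((deg e i)%:R : R)
     + cg R * \sum_(i | e w i && (i != v)) (Dd R e i)^-1) <= _)%R.
  rewrite lerD2l.
  apply: le_trans (_ : \sum_(i | P' i) (cA R / (n%:R + 1) + kap (n%:R) * ((deg e i)%:R - 1)
      + cg R * (e i w)%:R * (Dd R e i)^-1) <= _)%R.
    apply: ler_sum => i /andP [iv iw].
    case: (facts_i G wv wmax iv iw) => d1 d2 d3.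
    have d1' : (1 <= (deg e i)%:R :> R)%R by rewrite ler1n.
    have d2' : (2 * (deg e i)%:R <= n%:R + 3 :> R)%R.
      by move: d2; rewrite -(ler_nat R) natrM natrD => h; lra.
    rewrite xf_eq //.
    have -> : ((cA R + cg R * (e i w)%:R + cC n%:R * ((deg e i)%:R - 1)) / Dd R e i
       = (cA R + cC n%:R * ((deg e i)%:R - 1)) / Dd R e i + cg R * (e i w)%:R * (Dd R e i)^-1)%R.
      by ring.
    apply: lerD; last by [].
    have := P1 HN (_ : 0 <= (deg e i)%:R - 1)%R (_ : 2 * ((deg e i)%:R - 1) <= n%:R + 1)%R.
    by rewrite /Dd; apply; lra.
  rewrite big_split big_split /=; apply: lerD; first apply: lerD.
  - by [].
  - rewrite -mulr_sumr; apply: ler_wpM2l.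
      rewrite /kap /cC /cA; apply: addr_ge0; apply: divr_ge0; try nra.
      by apply: mulr_ge0; [lra | apply: divr_ge0; lra].
    apply: le_trans (_ : \sum_(i | P' i) ((deg e i)%:R : R) <= _)%R.
      by apply: ler_sum => i _; lra.
    apply: sum_sub => [i /andP [] //|i _]; exact: ler0n.
  - apply: le_trans (_ : cg R * \sum_(i | P' i) (e i w)%:R * (Dd R e i)^-1 <= _)%R.
      by rewrite mulr_sumr; apply: ler_sum => i _; rewrite mulrA.
    apply: ler_wpM2l => //.
    rewrite [X in (X <= _)%R]big_mkcond [X in (_ <= X)%R]big_mkcond /=.
    apply: ler_sum => i _; rewrite /P'.
    case: (boolP (i != v)) => iv; case: (boolP (i != w)) => iw; rewrite ?andbT ?andbF /=.
    + rewrite (g_sym G i w); case: (e w i) => /=; by rewrite ?mul1r ?mul0r.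
    + move: iw; rewrite negbK => /eqP ->; by rewrite (g_irr G).
    + by [].
    + by [].
have F5R : (37%:R * \sum_(i | i != v) ((deg e i)%:R : R) <= (n%:R - 1) * (2 * n%:R + 395%:R))%R.
  have := F5 G; rewrite -(ler_nat R) natrM natrM natrD natrM (np_real G R) -sum_natr.
  by [].
have T0 : (0 <= \sum_(i | i != v) ((deg e i)%:R : R))%R by apply: sumr_ge0 => i _; exact: ler0n.
have I := I4 HN T0 F5R.
have s1 := sumDw R G wv wmax.
have t1 : (cg R * \sum_(i | e w i && (i != v)) (Dd R e i)^-1 <= cg R)%R.
  by rewrite -[X in (_ <= X)%R]mulr1; apply: ler_wpM2l.
rewrite sum_const_card.
have -> : (#|[set i | P' i]|%:R = n%:R - 2 :> R)%R.
  have := card_nvw wv; rewrite -/P' => h.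
  have h' := congr1 (fun k => (k%:R)%R : R) h; rewrite natrD /= in h'; lra.
lra.
Qed.
Lemma xpos (R : realType) n e v w (G : good n e v) (wv : w != v)
  (wmax : forall u, u != v -> (deg e u <= deg e w)%N) i : (0 < xf R e v w i)%R.
Proof.
rewrite /xf; case: (i =P v) => [_|/eqP iv]; first lra.
case: (i =P w) => [_|/eqP iw]; first by rewrite /cg; lra.
have HN := realNN G R.
case: (facts_i G wv wmax iv iw) => d1 d2 d3.
have d1' : (1 <= (deg e i)%:R :> R)%R by rewrite ler1n.
have d2' : (2 * (deg e i)%:R <= n%:R + 3 :> R)%R.
  by move: d2; rewrite -(ler_nat R) natrM natrD => h; lra.
have C0 : (0 <= cC (n%:R : R))%R by rewrite /cC /cA; apply: divr_ge0; lra.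
have g0 : (0 <= cg R * (e i w)%:R)%R by apply: mulr_ge0; rewrite /cg ?ler0n //; lra.
apply: divr_gt0; last lra.
have : (0 <= cC n%:R * ((deg e i)%:R - 1) :> R)%R by apply: mulr_ge0 => //; lra.
rewrite /cA; lra.
Qed.

Lemma col_ok (R : realType) n e v w (G : good n e v) (wv : w != v)
  (wmax : forall u, u != v -> (deg e u <= deg e w)%N) j :
  (\sum_i signless_laplacian R e i j * xf R e v w i <= (n + 2)%:R * xf R e v w j)%R.
Proof.
rewrite (@colsumE R n e (g_sym G) (g_irr G)) natrD.
case: (j =P v) => [->|/eqP jv].
  rewrite (degv G) (np_real G R) {1 3}/xf eqxx !mulr1.
  have := row_v R G wv wmax; lra.
case: (j =P w) => [->|/eqP jw].
  rewrite {1 3}/xf (negbTE wv) eqxx.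
  have := row_w R G wv wmax; lra.
have := row_gen R G wv wmax jv jw.
rewrite xf_eq // /Dd.
set num := (cA R + _ + _)%R.
have HN := realNN G R.
have d2 : (2 * (deg e j)%:R <= n%:R + 3 :> R)%R.
  case: (facts_i G wv wmax jv jw) => _ d2 _.
  by move: d2; rewrite -(ler_nat R) natrM natrD => h; lra.
have D0 : (n%:R + 1 - ((deg e j)%:R - 1) != 0 :> R)%R by rewrite gt_eqF //; lra.
have -> : ((deg e j)%:R * (num / (n%:R + 1 - ((deg e j)%:R - 1))) = 
   (n%:R + 2) * (num / (n%:R + 1 - ((deg e j)%:R - 1))) - num :> R)%R.
  by field.
lra.
Qed.
Lemma bound_good (R : realType) n (e : rel 'I_n) v (G : good n e v) :
  (q_index R e <= (n + 2)%:R)%R.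
Proof.
have [u0 u0v] : exists u0, u0 != v.
  have : (0 < #|[pred u | u != v]|)%N by rewrite card_neq; have := g_n G; lia.
  by case/card_gt0P => u0; rewrite inE => h; exists u0.
have [w wv wmax] : exists2 w, w != v & forall u, u != v -> (deg e u <= deg e w)%N.
  case: (@arg_maxnP _ u0 (fun u => u != v) (deg e) u0v) => w wv H.
  by exists w.
rewrite /q_index.
apply: sup_le_c; first exact: ler0n.
move=> a /= ea.
apply: (collatz (x := xf R e v w)) ea.
- move=> i j; rewrite mxE; case: (i == j); exact: ler0n.
- exact: xpos G wv wmax.
- exact: col_ok G wv wmax.
Qed.

Unset Implicit Arguments.
Theorem lemma4p3 (R : realType) (n : nat) (e : rel 'I_n)
  (Hsym : symmetric e) (Hirr : irreflexive e)
  (Hmax : edge_maximal_K33_minor_free (@Graph n e))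
  (Hn : (1186 <= n)%N)
  (HDelta : Delta e = n.-1)
  (HDelta' : forall v : 'I_n, deg e v = Delta e ->
               forall u : 'I_n, u != v -> (deg e u <= n - 2)%N) :
  (q_index R e <= (n + 2)%:R)%R.
Proof.
have n0 : (0 < #|'I_n|)%N by rewrite card_ord; lia.
case: (bigop.eq_bigmax (deg e) n0) => v Hv.
have dv : deg e v = n.-1 by rewrite -HDelta /Delta Hv.
have dom : forall u, u != v -> e v u.
  have sub : [pred u | e v u] \subset [pred u | u != v].
    apply/fintype.subsetP => u; rewrite !inE; apply: contraL => /eqP ->.
    by rewrite Hirr.
  have eqc : #|[pred u | e v u]| = #|[pred u | u != v]| by rewrite card_neq -dv.
  move=> u uv; have := (subset_cardP eqc sub) u; rewrite !inE uv => ->.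
  done.
apply: (@bound_good R n e v).
constructor => //.
- move=> u uv; apply: (HDelta' v) => //; by rewrite HDelta.
- move=> u w uv wv uw; apply: (codeg3 Hsym Hirr _ dom) => //.
  exact: Hmax.1.
Qed.
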